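(* In the setup below (arbitrary gauge), assume $p(\omega|x)>0$ for all $\omega\in\checkmark$ and that $\langle F_{\omega,x}\rangle=\langle F_{\Omega,x}\rangle\langle E_{\omega,x}\rangle$ for all $\omega\in\checkmark$. Then $$\sum_{\omega\in\checkmark}p(\omega|x)I(\sigma_{x|\omega})=4\big(\langle G_{\checkmark,x}\rangle-\langle F_{\Omega,x}\rangle\langle F_{\checkmark,x}\rangle\big),$$ and, whenever $I^Q>0$, the relative loss $\kappa:=1-\sum_{\omega\in\checkmark}p(\omega|x)I(\sigma_{x|\omega})/I^Q$ equals $$\kappa=\frac{\langle G_{\times,x}\rangle-\langle F_{\Omega,x}\rangle\langle F_{\times,x}\rangle}{\langle G_{\Omega,x}\rangle-\langle F_{\Omega,x}\rangle^2}.$$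
   Context: Setup: finite-dimensional $\mathcal H_S,\mathcal H_E$; unit vectors $|\psi_i\rangle\in\mathcal H_S$, $|\phi_i^E\rangle\in\mathcal H_E$; a $C^1$ family of unitaries $U_x^{SE}$ on $\mathcal H_S\otimes\mathcal H_E$; an orthonormal basis $\{|\pi_\omega^E\rangle\}_{\omega\in\Omega}$ of $\mathcal H_E$, $\Omega=\checkmark\sqcup\times$. $|\Psi_x^{SE}\rangle=U_x^{SE}(|\psi_i\rangle\otimes|\phi_i^E\rangle)$, $M_{\omega,x}=\langle\pi_\omega^E|U_x^{SE}|\phi_i^E\rangle$, $|\tilde\psi_{x|\omega}\rangle=M_{\omega,x}|\psi_i\rangle$, $p(\omega|x)=\|\tilde\psi_{x|\omega}\|^2$, $\sigma_{x|\omega}=|\tilde\psi_{x|\omega}\rangle\langle\tilde\psi_{x|\omega}|/p(\omega|x)$. QFI of a normalized pure state: $I(|\phi_x\rangle)=4(\langle\partial_x\phi_x|\partial_x\phi_x\rangle-|\langle\phi_x|\partial_x\phi_x\rangle|^2)$; $I^Q=I(|\Psi_x^{SE}\rangle)$. Define $E_{\omega,x}=M_{\omega,x}^\dagger M_{\omega,x}$, $F_{\omega,x}=i\,\partial_xM_{\omega,x}^\dagger M_{\omega,x}$, $G_{\omega,x}=\partial_xM_{\omega,x}^\dagger\partial_xM_{\omega,x}$, and for $S\subseteq\Omega$, $X_{S,x}=\sum_{\omega\in S}X_{\omega,x}$. $\langle A\rangle=\langle\psi_i|A|\psi_i\rangle$. *)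

(* Defs.v *)
From HB Require Import structures.
From mathcomp Require Import all_boot all_order all_algebra.
From mathcomp Require Import all_classical all_reals all_analysis.
From mathcomp Require Import complex mxtens.
Set Implicit Arguments.
Unset Strict Implicit.
Unset Printing Implicit Defensive.
Import Order.TTheory GRing.Theory Num.Theory.
Import numFieldNormedType.Exports.
Local Open Scope ring_scope.

Section QDefs.
Variable R : realType.
Local Notation C := R[i].

Definition adjmx (p q : nat) (A : 'M[C]_(p, q)) : 'M[C]_(q, p) :=
  (map_mx Num.conj A)^T.

Definition inner (k : nat) (a b : 'cV[C]_k) : C := (adjmx a *m b) 0 0.

Definition cderivable (f : R -> C) (x : R) : Prop :=
  derivable (fun t => complex.Re (f t)) x 1 /\
  derivable (fun t => complex.Im (f t)) x 1.

Definition cderive (f : R -> C) (x : R) : C :=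
  Complex (derive1 (fun t => complex.Re (f t)) x)
          (derive1 (fun t => complex.Im (f t)) x).

Definition mderive (p q : nat) (A : R -> 'M[C]_(p, q)) (x : R) : 'M[C]_(p, q) :=
  \matrix_(i, j) cderive (fun t => A t i j) x.

Definition C1_family (p q : nat) (A : R -> 'M[C]_(p, q)) : Prop :=
  forall i j,
    (forall t, cderivable (fun s => A s i j) t) /\
    continuous (fun t : R => derive1 (fun s => complex.Re (A s i j)) t) /\
    continuous (fun t : R => derive1 (fun s => complex.Im (A s i j)) t).

Definition QFI (k : nat) (phi : R -> 'cV[C]_k) (x : R) : C :=
  let dphi := mderive phi x in
  4 * (inner dphi dphi - `|inner (phi x) dphi| ^+ 2).

Section Setup.
Variables (n m : nat).
Variable (psi : 'cV[C]_n) (phiE : 'cV[C]_m).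
Variable (U : R -> 'M[C]_(n * m)).
(* orthonormal basis {|pi_w>} of H_E : the columns of P (w : 'I_m) *)
Variable (P : 'M[C]_m).

Definition pivec (w : 'I_m) : 'cV[C]_m := col w P.

Definition PsiSE (x : R) : 'cV[C]_(n * m) :=
  U x *m castmx (erefl, muln1 1) (psi *t phiE).

(* M_{w,x} = <pi_w^E| U_x |phi^E>  (operator on H_S) *)
Definition Mop (w : 'I_m) (x : R) : 'M[C]_n :=
  castmx (muln1 n, muln1 n)
    ((1%:M *t adjmx (pivec w)) *m U x *m (1%:M *t phiE)).

Definition psitilde (w : 'I_m) (x : R) : 'cV[C]_n := Mop w x *m psi.

Definition prob (w : 'I_m) (x : R) : C := inner (psitilde w x) (psitilde w x).

(* normalized pure state representing sigma_{x|w} *)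
Definition sigmavec (w : 'I_m) (x : R) : 'cV[C]_n :=
  (sqrtC (prob w x))^-1 *: psitilde w x.

Definition Eop (w : 'I_m) (x : R) : 'M[C]_n := adjmx (Mop w x) *m Mop w x.
Definition Fop (w : 'I_m) (x : R) : 'M[C]_n :=
  'i *: (adjmx (mderive (Mop w) x) *m Mop w x).
Definition Gop (w : 'I_m) (x : R) : 'M[C]_n :=
  adjmx (mderive (Mop w) x) *m mderive (Mop w) x.

Definition sumS (X : 'I_m -> R -> 'M[C]_n) (S : {set 'I_m}) (x : R) : 'M[C]_n :=
  \sum_(w in S) X w x.

Definition expect (A : 'M[C]_n) : C := (adjmx psi *m A *m psi) 0 0.

End Setup.
End QDefs.

(* Main.v *)
Require Import Defs.
From HB Require Import structures.
From mathcomp Require Import all_boot all_order all_algebra.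
From mathcomp Require Import all_classical all_reals all_analysis.
From mathcomp Require Import complex mxtens.
From mathcomp Require Import ring lra.
Import Order.TTheory GRing.Theory Num.Theory.
Import numFieldNormedType.Exports.
Local Open Scope ring_scope.
Section CD.
Local Set Implicit Arguments.
Local Unset Strict Implicit.
Variable R : realType.
Local Notation C := R[i].

Lemma ReD (a b : C) : complex.Re (a + b) = complex.Re a + complex.Re b.
Proof. by case: a; case: b. Qed.
Lemma ImD (a b : C) : complex.Im (a + b) = complex.Im a + complex.Im b.
Proof. by case: a; case: b. Qed.
Lemma ReM (a b : C) : complex.Re (a * b) = complex.Re a * complex.Re b - complex.Im a * complex.Im b.
Proof. by case: a; case: b. Qed.
Lemma ImM (a b : C) : complex.Im (a * b) = complex.Re a * complex.Im b + complex.Im a * complex.Re b.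
Proof. by case: a; case: b. Qed.
Lemma Re0 : complex.Re (0 : C) = 0. Proof. by []. Qed.
Lemma Im0 : complex.Im (0 : C) = 0. Proof. by []. Qed.
Lemma ReJ (a : C) : complex.Re (a^*) = complex.Re a. Proof. by case: a. Qed.
Lemma ImJ (a : C) : complex.Im (a^*) = - complex.Im a. Proof. by case: a. Qed.

Definition cisd (f : R -> C) (x : R) (d : C) :=
  is_derive x 1 (fun t => complex.Re (f t)) (complex.Re d) /\
  is_derive x 1 (fun t => complex.Im (f t)) (complex.Im d).

Lemma cisd_val f x d : cisd f x d -> cderivable f x /\ cderive f x = d.
Proof.
case=> H1 H2; split; first by split; apply: ex_derive.
by rewrite /cderive !derive1E !derive_val; case: d {H1 H2}.
Qed.

Lemma cderivableP f x : cderivable f x -> cisd f x (cderive f x).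
Proof. by case=> H1 H2; split; rewrite /cderive /= derive1E; apply: derivableP. Qed.

Lemma cisd_eq f g x d d' : cisd f x d -> f = g -> d = d' -> cisd g x d'.
Proof. by move=> ? <- <-. Qed.

Lemma cisd_cst (c : C) x : cisd (fun _ => c) x 0.
Proof. by split; apply: is_derive_cst. Qed.

Lemma cisd_add f g x a b : cisd f x a -> cisd g x b ->
  cisd (fun t => f t + g t) x (a + b).
Proof.
case=> Hf1 Hf2 [Hg1 Hg2]; split.
  have -> : (fun t => complex.Re (f t + g t)) =
    (fun t => complex.Re (f t)) + (fun t => complex.Re (g t)).
    by apply/funext => t /=; rewrite ReD.
  by rewrite ReD; apply: is_deriveD.
have -> : (fun t => complex.Im (f t + g t)) =
  (fun t => complex.Im (f t)) + (fun t => complex.Im (g t)).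
  by apply/funext => t /=; rewrite ImD.
by rewrite ImD; apply: is_deriveD.
Qed.

Lemma cisd_mul f g x a b : cisd f x a -> cisd g x b ->
  cisd (fun t => f t * g t) x (a * g x + f x * b).
Proof.
case=> Hf1 Hf2 [Hg1 Hg2]; split.
  have -> : (fun t => complex.Re (f t * g t)) =
    (fun t => complex.Re (f t)) * (fun t => complex.Re (g t)) -
    (fun t => complex.Im (f t)) * (fun t => complex.Im (g t)).
    by apply/funext => t /=; rewrite ReM.
  apply: is_derive_eq; rewrite ReD !ReM /=.
  rewrite /GRing.scale /=. lra.
have -> : (fun t => complex.Im (f t * g t)) =
  (fun t => complex.Re (f t)) * (fun t => complex.Im (g t)) +
  (fun t => complex.Im (f t)) * (fun t => complex.Re (g t)).
  by apply/funext => t /=; rewrite ImM.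
apply: is_derive_eq; rewrite ImD !ImM /=.
rewrite /GRing.scale /=. lra.
Qed.

Lemma cisd_conj f x a : cisd f x a -> cisd (fun t => (f t)^*) x a^*.
Proof.
case=> H1 H2; split.
  have -> : (fun t => complex.Re ((f t)^*)) = (fun t => complex.Re (f t)).
    by apply/funext => t; rewrite ReJ.
  by rewrite ReJ.
have -> : (fun t => complex.Im ((f t)^*)) = - (fun t => complex.Im (f t)).
  by apply/funext => t /=; rewrite ImJ.
by rewrite ImJ; apply: is_deriveN.
Qed.

Lemma cisd_sum (I : Type) (r : seq I) (P : pred I) (F : I -> R -> C) (dF : I -> C) x :
  (forall i, P i -> cisd (F i) x (dF i)) ->
  cisd (fun t => \sum_(i <- r | P i) F i t) x (\sum_(i <- r | P i) dF i).
Proof.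
move=> H; elim: r => [|a r IH].
  eapply cisd_eq; [exact: (cisd_cst (0:C) x)| |by rewrite big_nil].
  by apply/funext => t; rewrite big_nil.
case Pa: (P a).
  eapply cisd_eq; [exact: (cisd_add (H a Pa) IH)| |by rewrite big_cons Pa].
  by apply/funext => t; rewrite big_cons Pa.
eapply cisd_eq; [exact: IH| |by rewrite big_cons Pa].
by apply/funext => t; rewrite big_cons Pa.
Qed.


Definition mcisd (p q : nat) (V : R -> 'M[C]_(p, q)) (x : R) (D : 'M[C]_(p, q)) :=
  forall i j, cisd (fun t => V t i j) x (D i j).

Lemma mcisd_val p q (V : R -> 'M[C]_(p, q)) x D : mcisd V x D -> mderive V x = D.
Proof. by move=> H; apply/matrixP => i j; rewrite mxE; case: (cisd_val (H i j)). Qed.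

Lemma mcisd_cst p q (A : 'M[C]_(p, q)) x : mcisd (fun _ => A) x 0.
Proof. by move=> i j; rewrite mxE; apply: cisd_cst. Qed.

Lemma mcisd_eq p q (V W : R -> 'M[C]_(p, q)) x D D' :
  mcisd V x D -> V = W -> D = D' -> mcisd W x D'.
Proof. by move=> ? <- <-. Qed.

Lemma mcisd_mul p q r (A : R -> 'M[C]_(p, q)) (B : R -> 'M[C]_(q, r)) x dA dB :
  mcisd A x dA -> mcisd B x dB ->
  mcisd (fun t => A t *m B t) x (dA *m B x + A x *m dB).
Proof.
move=> HA HB i j.
eapply cisd_eq.
- apply: (cisd_sum (index_enum 'I_q) (P := xpredT)
     (F := fun k t => A t i k * B t k j)) => k _.
  exact: cisd_mul.
- by apply/funext => t; rewrite mxE.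
- rewrite !mxE -big_split /=; by apply: eq_bigr.
Qed.

Lemma mcisd_scale p q (c : R -> C) (V : R -> 'M[C]_(p, q)) x dc D :
  cisd c x dc -> mcisd V x D ->
  mcisd (fun t => c t *: V t) x (dc *: V x + c x *: D).
Proof.
move=> Hc HV i j; eapply cisd_eq.
- exact: (cisd_mul Hc (HV i j)).
- by apply/funext => t; rewrite mxE.
- by rewrite !mxE.
Qed.

Lemma mcisd_adj p q (V : R -> 'M[C]_(p, q)) x D :
  mcisd V x D -> mcisd (fun t => adjmx (V t)) x (adjmx D).
Proof.
move=> HV i j; eapply cisd_eq.
- exact: (cisd_conj (HV j i)).
- by apply/funext => t; rewrite !mxE.
- by rewrite !mxE.
Qed.

Lemma mcisd_cast p q p' q' (e : (p = p') * (q = q')) (V : R -> 'M[C]_(p, q)) x D :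
  mcisd V x D -> mcisd (fun t => castmx e (V t)) x (castmx e D).
Proof.
move=> HV i j; eapply cisd_eq.
- exact: (HV (cast_ord (esym e.1) i) (cast_ord (esym e.2) j)).
- by apply/funext => t; rewrite castmxE.
- by rewrite castmxE.
Qed.

Lemma mcisd_C1 p q (V : R -> 'M[C]_(p, q)) x : C1_family V -> mcisd V x (mderive V x).
Proof.
move=> H i j; rewrite mxE; apply: cderivableP.
by case: (H i j) => H1 _; apply: H1.
Qed.


Lemma adjmxE p q (A : 'M[C]_(p, q)) i j : adjmx A i j = (A j i)^*.
Proof. by rewrite !mxE. Qed.

Lemma adjmxM p q r (A : 'M[C]_(p, q)) (B : 'M[C]_(q, r)) :
  adjmx (A *m B) = adjmx B *m adjmx A.
Proof. by rewrite /adjmx map_mxM trmx_mul. Qed.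

Lemma adjmxK p q (A : 'M[C]_(p, q)) : adjmx (adjmx A) = A.
Proof. by apply/matrixP => i j; rewrite !mxE conjCK. Qed.

Lemma adjmxD p q (A B : 'M[C]_(p, q)) : adjmx (A + B) = adjmx A + adjmx B.
Proof. by apply/matrixP => i j; rewrite !mxE rmorphD. Qed.

Lemma adjmxZ p q (c : C) (A : 'M[C]_(p, q)) : adjmx (c *: A) = c^* *: adjmx A.
Proof. by apply/matrixP => i j; rewrite !mxE rmorphM. Qed.

Lemma adjmx_sum p q (I : Type) (r : seq I) (P : pred I) (F : I -> 'M[C]_(p, q)) :
  adjmx (\sum_(k <- r | P k) F k) = \sum_(k <- r | P k) adjmx (F k).
Proof.
apply/matrixP => i j; rewrite !mxE !summxE rmorph_sum; apply: eq_bigr => k _.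
by rewrite !mxE.
Qed.

Lemma adjmx1 p : adjmx (1%:M : 'M[C]_p) = 1%:M.
Proof. by apply/matrixP => i j; rewrite !mxE rmorph_nat eq_sym. Qed.

Lemma adjmx_cast p q p' q' (e1 : p = p') (e2 : q = q') (A : 'M[C]_(p, q)) :
  adjmx (castmx (e1, e2) A) = castmx (e2, e1) (adjmx A).
Proof. by apply/matrixP => i j; rewrite !(castmxE, mxE). Qed.

Lemma adjmx_tens p q p' q' (A : 'M[C]_(p, q)) (B : 'M[C]_(p', q')) :
  adjmx (A *t B) = adjmx A *t adjmx B.
Proof. by rewrite /adjmx map_mxT trmx_tens. Qed.

Lemma innerE k (a b : 'cV[C]_k) : inner a b = \sum_i (a i 0)^* * b i 0.
Proof. by rewrite /inner mxE; apply: eq_bigr => i _; rewrite !mxE. Qed.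

Lemma inner_adj p q (A : 'M[C]_(p, q)) a b : inner (A *m a) b = inner a (adjmx A *m b).
Proof. by rewrite /inner adjmxM mulmxA. Qed.

Lemma innerC k (a b : 'cV[C]_k) : inner b a = (inner a b)^*.
Proof.
rewrite !innerE rmorph_sum; apply: eq_bigr => i _.
by rewrite rmorphM /= conjCK mulrC.
Qed.

Lemma innerZl k c (a b : 'cV[C]_k) : inner (c *: a) b = c^* * inner a b.
Proof.
rewrite !innerE mulr_sumr; apply: eq_bigr => i _.
by rewrite mxE rmorphM mulrA.
Qed.

Lemma innerZr k c (a b : 'cV[C]_k) : inner a (c *: b) = c * inner a b.
Proof.
rewrite !innerE mulr_sumr; apply: eq_bigr => i _.
by rewrite mxE mulrCA.
Qed.

Lemma innerDl k (a a' b : 'cV[C]_k) : inner (a + a') b = inner a b + inner a' b.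
Proof.
rewrite !innerE -big_split; apply: eq_bigr => i _.
by rewrite mxE rmorphD mulrDl.
Qed.

Lemma innerDr k (a b b' : 'cV[C]_k) : inner a (b + b') = inner a b + inner a b'.
Proof.
rewrite !innerE -big_split; apply: eq_bigr => i _.
by rewrite mxE mulrDr.
Qed.

Lemma inner_cast k k' (e : k = k') (a b : 'cV[C]_k) :
  inner (castmx (e, erefl) a) (castmx (e, erefl) b) = inner a b.
Proof. by case: k' / e; rewrite !castmx_id. Qed.

Lemma inner_ge0 k (a : 'cV[C]_k) : 0 <= inner a a.
Proof.
rewrite innerE; apply: sumr_ge0 => i _.
by rewrite mulrC -normCK exprn_ge0.
Qed.


Lemma castmx_triv p q (e1 : p = p) (e2 : q = q) (A : 'M[C]_(p, q)) : castmx (e1, e2) A = A.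
Proof. by rewrite (eq_irrelevance e1 erefl) (eq_irrelevance e2 erefl) castmx_id. Qed.

Lemma cast_mul_vec k n (e : k = n) (X : 'M[C]_k) (y : 'cV[C]_n) :
  castmx (e, e) X *m y = castmx (e, erefl) (X *m castmx (esym e, erefl) y).
Proof. by case: n / e in y *; rewrite !castmx_id. Qed.

Lemma inner_sumr k (I : Type) (r : seq I) (P : pred I) (a : 'cV[C]_k) (F : I -> 'cV[C]_k) :
  inner a (\sum_(i <- r | P i) F i) = \sum_(i <- r | P i) inner a (F i).
Proof. by rewrite /inner mulmx_sumr summxE. Qed.

Lemma tensmx_sumr p q p' q' (A : 'M[C]_(p, q)) (I : Type) (r : seq I) (P : pred I)
   (F : I -> 'M[C]_(p', q')) :
  A *t (\sum_(i <- r | P i) F i) = \sum_(i <- r | P i) (A *t F i).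
Proof.
apply/matrixP => i j; rewrite summxE !mxE summxE mulr_sumr.
by apply: eq_bigr => k _; rewrite !mxE.
Qed.

Lemma tens11 p q : (1%:M : 'M[C]_p) *t (1%:M : 'M[C]_q) = 1%:M.
Proof.
apply/matrixP => i j.
case: (mxtens_indexP i) => i0 i1; case: (mxtens_indexP j) => j0 j1.
rewrite tensmxE !mxE (inj_eq (can_inj (@mxtens_indexK p q))) xpair_eqE.
by case: (i0 == j0); case: (i1 == j1); rewrite /= ?mulr1 ?mulr0 ?mul0r.
Qed.

Section Kron.
Variables (n m : nat) (psi : 'cV[C]_n) (phiE : 'cV[C]_m) (P : 'M[C]_m).

Definition Bw (w : 'I_m) : 'M[C]_(n * 1, n * m) := 1%:M *t adjmx (pivec P w).
Definition Psi0 : 'cV[C]_(n * m) := castmx (erefl, muln1 1) (psi *t phiE).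

Lemma Mop_psi_gen w (V : 'M[C]_(n * m)) :
  castmx (muln1 n, muln1 n) (Bw w *m V *m (1%:M *t phiE)) *m psi
  = castmx (muln1 n, erefl) (Bw w *m (V *m Psi0)).
Proof.
rewrite cast_mul_vec; congr castmx; rewrite -!mulmxA; congr (_ *m (_ *m _)).
have -> : castmx (esym (muln1 n), erefl) psi = psi *t (1%:M : 'M[C]_1).
  by rewrite tens_mx_scalar scale1r (eq_irrelevance (esym (muln1 1%N)) erefl).
by rewrite (tensmx_mul (1%:M : 'M[C]_n) phiE psi (1%:M : 'M[C]_1)) mul1mx mulmx1 /Psi0 castmx_triv.
Qed.

Lemma sum_BB : adjmx P *m P = 1%:M -> \sum_w adjmx (Bw w) *m Bw w = 1%:M.
Proof.
move=> HP.
have HP' : P *m adjmx P = 1%:M by apply: mulmx1C.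
transitivity ((1%:M : 'M[C]_n) *t \sum_w (pivec P w *m adjmx (pivec P w))).
  rewrite tensmx_sumr; apply: eq_bigr => w _.
  by rewrite /Bw adjmx_tens adjmx1 adjmxK tensmx_mul mul1mx.
have -> : \sum_w (pivec P w *m adjmx (pivec P w)) = P *m adjmx P.
  apply/matrixP => i j; rewrite summxE !mxE; apply: eq_bigr => w _.
  by rewrite !mxE big_ord1 !mxE.
by rewrite HP' tens11.
Qed.

Lemma sum_inner_B (y z : 'cV[C]_(n * m)) : adjmx P *m P = 1%:M ->
  \sum_w inner (castmx (muln1 n, erefl) (Bw w *m y)) (castmx (muln1 n, erefl) (Bw w *m z))
  = inner y z.
Proof.
move=> HP.
under eq_bigr do rewrite inner_cast inner_adj.
rewrite -inner_sumr; congr inner.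
by rewrite -[RHS]mul1mx -(sum_BB HP) mulmx_suml; apply: eq_bigr => w _; rewrite mulmxA.
Qed.

End Kron.

Lemma expect_adj k n (psi : 'cV[C]_n) (A B : 'M[C]_(k, n)) :
  expect psi (adjmx A *m B) = inner (A *m psi) (B *m psi).
Proof. by rewrite /expect /inner adjmxM !mulmxA. Qed.

Lemma expect_scale n (psi : 'cV[C]_n) c (A : 'M[C]_n) :
  expect psi (c *: A) = c * expect psi A.
Proof. by rewrite /expect -scalemxAr -scalemxAl mxE. Qed.

Lemma expect_sum n (psi : 'cV[C]_n) (I : Type) (r : seq I) (P : pred I) (F : I -> 'M[C]_n) :
  expect psi (\sum_(i <- r | P i) F i) = \sum_(i <- r | P i) expect psi (F i).
Proof. by rewrite /expect mulmx_sumr mulmx_suml summxE. Qed.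

Lemma cisd_inner k (a b : R -> 'cV[C]_k) x da db :
  mcisd a x da -> mcisd b x db ->
  cisd (fun t => inner (a t) (b t)) x (inner da (b x) + inner (a x) db).
Proof.
move=> Ha Hb; have := mcisd_mul (mcisd_adj Ha) Hb 0 0.
by rewrite mxE.
Qed.

Lemma sqrtC_realC (r : R) : 0 <= r -> sqrtC (r%:C%C) = (Num.sqrt r)%:C%C.
Proof.
move=> r0.
have -> : r%:C%C = ((Num.sqrt r)%:C%C) ^+ 2 :> C by rewrite -rmorphXn /= sqr_sqrtr.
by rewrite sqrCK // lecR sqrtr_ge0.
Qed.

Lemma c_formula (q : C) : 0 <= q ->
  (sqrtC q)^-1 = ((Num.sqrt (complex.Re q))^-1)%:C%C.
Proof.
move=> q0; rewrite -[in LHS](RRe_real (ger0_real q0)) sqrtC_realC.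
  by rewrite -fmorphV.
by move: q0; rewrite lecE => /andP[].
Qed.

Lemma cisd_invsqrt (f : R -> C) x d : cisd f x d -> (forall t, 0 <= f t) -> 0 < f x ->
  exists dc : R, cisd (fun t => (sqrtC (f t))^-1) x dc%:C%C.
Proof.
move=> [Hg _] Hnn Hpos.
have Hre : 0 < complex.Re (f x) by move: Hpos; rewrite ltcE => /andP[].
have Hs := is_derive1_comp (is_derive1_sqrt Hre) Hg.
have Hnz : (Num.sqrt \o (fun t => complex.Re (f t))) x != 0.
  by rewrite /= gt_eqF // sqrtr_gt0.
have Hd := derivableV Hnz (@ex_derive _ _ _ _ _ _ _ Hs).
have Hfun : (fun t => complex.Re ((sqrtC (f t))^-1)) =
            (fun t => ((Num.sqrt \o (fun t => complex.Re (f t))) t)^-1).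
  by apply/funext => t; rewrite c_formula.
exists ('D_1 (fun t => ((Num.sqrt \o (fun t => complex.Re (f t))) t)^-1) x); split.
  by rewrite Hfun /=; apply: derivableP.
have -> : (fun t => complex.Im ((sqrtC (f t))^-1)) = cst 0.
  by apply/funext => t; rewrite c_formula.
exact: is_derive_cst.
Qed.

Lemma qfi_scaled k (t dt : 'cV[C]_k) (c dc : C) : c^* = c -> dc^* = dc -> c != 0 ->
  c^+2 * inner t t = 1 ->
  inner t t * (4 * (inner (dc *: t + c *: dt) (dc *: t + c *: dt)
                    - `|inner (c *: t) (dc *: t + c *: dt)|^+2))
  = 4 * (inner dt dt - c^+2 * (inner dt t * inner t dt)).
Proof.
move=> Hc Hdc Hc0 Hp.
rewrite normCK -innerC.
rewrite !(innerDl, innerDr, innerZl, innerZr) Hc Hdc.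
have Hpe : inner t t = (c^+2)^-1.
  by apply: (mulfI (expf_neq0 2 Hc0)); rewrite Hp divff // expf_neq0.
rewrite Hpe.
field; exact: Hc0.
Qed.
End CD.
Section Main.
Local Set Implicit Arguments.
Variable R : realType.
Local Notation C := R[i].
Variables (n m : nat) (psi : 'cV[C]_n) (phiE : 'cV[C]_m) (U : R -> 'M[C]_(n * m))
  (P : 'M[C]_m) (x : R).
Lemma Mop_def w t : Mop phiE U P w t =
  castmx (muln1 n, muln1 n) (Bw n P w *m U t *m (1%:M *t phiE)).
Proof. by []. Qed.

Lemma mcisd_Mop w dU : mcisd U x dU ->
  mcisd (Mop phiE U P w) x (castmx (muln1 n, muln1 n) (Bw n P w *m dU *m (1%:M *t phiE))).
Proof.
move=> HU.
have := mcisd_cast (muln1 n, muln1 n)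
  (mcisd_mul (mcisd_mul (mcisd_cst (Bw n P w) x) HU) (mcisd_cst (1%:M *t phiE) x)).
move/mcisd_eq; apply.
  by apply/funext => t.
by rewrite mul0mx add0r mulmx0 addr0.
Qed.

Lemma psit_eq w t : psitilde psi phiE U P w t =
  castmx (muln1 n, erefl) (Bw n P w *m (U t *m Psi0 psi phiE)).
Proof. by rewrite /psitilde Mop_def Mop_psi_gen. Qed.

Lemma mcisd_psit w dU : mcisd U x dU ->
  mcisd (psitilde psi phiE U P w) x (castmx (muln1 n, erefl) (Bw n P w *m (dU *m Psi0 psi phiE))).
Proof.
move=> HU.
have := mcisd_mul (mcisd_Mop w HU) (mcisd_cst psi x).
move/mcisd_eq; apply.
  by apply/funext => t.
by rewrite mulmx0 addr0 Mop_psi_gen.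
Qed.

Lemma mcisd_PsiSE dU : mcisd U x dU -> mcisd (PsiSE psi phiE U) x (dU *m Psi0 psi phiE).
Proof.
move=> HU; have := mcisd_mul HU (mcisd_cst (Psi0 psi phiE) x).
move/mcisd_eq; apply; first by apply/funext => t.
by rewrite mulmx0 addr0.
Qed.

End Main.

Theorem mainTheorem4 (R : realType) (n m : nat)
  (psi : 'cV[R[i]]_n) (phiE : 'cV[R[i]]_m)
  (U : R -> 'M[R[i]]_(n * m)) (P : 'M[R[i]]_m)
  (Good : {set 'I_m}) (x : R) :
  inner psi psi = 1 ->
  inner phiE phiE = 1 ->
  (forall t, adjmx (U t) *m U t = 1%:M) ->
  C1_family U ->
  adjmx P *m P = 1%:M ->
  (forall w, w \in Good -> 0 < prob psi phiE U P w x) ->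
  (forall w, w \in Good ->
     expect psi (Fop phiE U P w x)
     = expect psi (sumS (Fop phiE U P) [set: 'I_m] x)
       * expect psi (Eop phiE U P w x)) ->
  let FOm := expect psi (sumS (Fop phiE U P) [set: 'I_m] x) in
  let IQ := QFI (PsiSE psi phiE U) x in
  let Isum := \sum_(w in Good)
                prob psi phiE U P w x * QFI (sigmavec psi phiE U P w) x in
  Isum = 4 * (expect psi (sumS (Gop phiE U P) Good x)
              - FOm * expect psi (sumS (Fop phiE U P) Good x))
  /\
  (0 < IQ ->
   1 - Isum / IQ
   = (expect psi (sumS (Gop phiE U P) (~: Good) x)
      - FOm * expect psi (sumS (Fop phiE U P) (~: Good) x))
     / (expect psi (sumS (Gop phiE U P) [set: 'I_m] x) - FOm ^+ 2)).
Proof.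
move=> Hpsi Hphi HUu HC1 HP Hpos HF FOm IQ Isum.
set dU := mderive U x.
have HdU : mcisd U x dU := mcisd_C1 x HC1.
set Psi0' := Psi0 psi phiE.
set tv := fun w => castmx (muln1 n, erefl) (Bw n P w *m (U x *m Psi0')).
set dtv := fun w => castmx (muln1 n, erefl) (Bw n P w *m (dU *m Psi0')).
have HdM w : mderive (Mop phiE U P w) x =
    castmx (muln1 n, muln1 n) (Bw n P w *m dU *m (1%:M *t phiE)).
  by apply: mcisd_val; apply: mcisd_Mop.
have EG w : expect psi (Gop phiE U P w x) = inner (dtv w) (dtv w).
  by rewrite /Gop expect_adj HdM Mop_psi_gen.
have EF w : expect psi (Fop phiE U P w x) = 'i * inner (dtv w) (tv w).
  by rewrite /Fop expect_scale expect_adj HdM Mop_def Mop_psi_gen Mop_psi_gen.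
have EE w : expect psi (Eop phiE U P w x) = inner (tv w) (tv w).
  by rewrite /Eop expect_adj Mop_def Mop_psi_gen.
have Eprob w : prob psi phiE U P w x = inner (tv w) (tv w).
  by rewrite /prob psit_eq.
have setT_sum (F : 'I_m -> R[i]) : \sum_(w in [set: 'I_m]) F w = \sum_w F w.
  by apply: eq_bigl => w; rewrite inE.
set Psi := U x *m Psi0'.
set dPsi := dU *m Psi0'.
have SG : \sum_w inner (dtv w) (dtv w) = inner dPsi dPsi := sum_inner_B _ _ HP.
have SF : \sum_w inner (dtv w) (tv w) = inner dPsi Psi := sum_inner_B _ _ HP.
have FOmE : FOm = 'i * inner dPsi Psi.
  by rewrite /FOm /sumS expect_sum setT_sum; under eq_bigr do rewrite EF; rewrite -mulr_sumr SF.
set a := inner dPsi Psi.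
have Ha : a + a^* = 0.
  have H1 := cisd_inner (mcisd_PsiSE psi phiE HdU) (mcisd_PsiSE psi phiE HdU).
  have Hconst : (fun t => inner (PsiSE psi phiE U t) (PsiSE psi phiE U t))
      = (fun _ => inner Psi0' Psi0').
    by apply/funext => t; rewrite /PsiSE inner_adj mulmxA HUu mul1mx.
  rewrite Hconst in H1.
  have [_ E1] := cisd_val H1.
  have [_ E2] := cisd_val (cisd_cst (inner Psi0' Psi0') x).
  by rewrite /a -innerC; exact: (etrans (esym E1) E2).
have FOmR : FOm^* = FOm.
  rewrite FOmE rmorphM /= conjCi.
  have -> : a^* = - a by apply/eqP; rewrite -addr_eq0 addrC Ha.
  by rewrite mulrNN.
have IQE : IQ = 4 * (expect psi (sumS (Gop phiE U P) [set: 'I_m] x) - FOm ^+ 2).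
  rewrite /IQ /QFI /= (mcisd_val (mcisd_PsiSE psi phiE HdU)).
  rewrite /sumS expect_sum setT_sum; under eq_bigr do rewrite EG; rewrite SG.
  rewrite normCK -innerC -/a FOmE exprMn sqrCi.
  have Hb : inner Psi dPsi = - a.
    by rewrite innerC -/a; apply/eqP; rewrite -addr_eq0 addrC Ha.
  rewrite /PsiSE -/Psi0' -/Psi -/dPsi Hb -/a; ring.
have Hw w : w \in Good -> prob psi phiE U P w x * QFI (sigmavec psi phiE U P w) x
    = 4 * (expect psi (Gop phiE U P w x) - FOm * expect psi (Fop phiE U P w x)).
  move=> wG.
  have Hpt : mcisd (psitilde psi phiE U P w) x (dtv w) by apply: mcisd_psit.
  have Hprob := cisd_inner Hpt Hpt.
  have [dc Hc] := cisd_invsqrt Hprob (fun t => inner_ge0 _) (Hpos w wG).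
  have HS := mcisd_scale Hc Hpt.
  rewrite /QFI /= (mcisd_val HS) /sigmavec.
  rewrite -[inner (psitilde psi phiE U P w x) (psitilde psi phiE U P w x)]/(prob psi phiE U P w x).
  rewrite Eprob psit_eq -/(tv w).
  have pgt0 : 0 < inner (tv w) (tv w) by rewrite -Eprob; apply: Hpos.
  set p := inner (tv w) (tv w) in pgt0 *.
  have sgt0 : 0 < sqrtC p by rewrite sqrtC_gt0.
  have Hcr : ((sqrtC p)^-1)^* = (sqrtC p)^-1.
    by apply: conj_Creal; rewrite realV; apply: ger0_real; apply: ltW.
  have Hc0 : (sqrtC p)^-1 != 0 by rewrite invr_eq0 gt_eqF.
  have Hcp : ((sqrtC p)^-1)^+2 * p = 1.
    by rewrite exprVn sqrtCK mulVf // gt_eqF.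
  rewrite (qfi_scaled (dtv w) Hcr (conjc_real dc) Hc0 Hcp).
  rewrite EG EF.
  have Hu : 'i * inner (dtv w) (tv w) = FOm * p by rewrite -EF HF // EE.
  set u := inner (dtv w) (tv w) in Hu *.
  rewrite (innerC (dtv w) (tv w)) -/u.
  have pR : p^* = p by apply: conj_Creal; apply: ger0_real; apply: ltW.
  have Hu' : (- 'i) * u^* = FOm * p.
    by have := congr1 Num.conj Hu; rewrite !rmorphM /= conjCi FOmR pR.
  have Huu : u * u^* = (FOm * p) ^+ 2.
    have E : ('i * u) * (- 'i * u^*) = - ('i ^+ 2) * (u * u^*) by ring.
    by rewrite Hu Hu' sqrCi opprK mul1r in E; rewrite -E expr2.
  rewrite Huu Hu; congr (4 * (_ - _)).
  transitivity (FOm ^+ 2 * p * (((sqrtC p)^-1) ^+ 2 * p)); first by ring.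
  by rewrite Hcp; ring.
have IsumE : Isum = 4 * (expect psi (sumS (Gop phiE U P) Good x)
              - FOm * expect psi (sumS (Fop phiE U P) Good x)).
  rewrite /Isum (eq_bigr _ Hw) /sumS !expect_sum -mulr_sumr sumrB -mulr_sumr.
  by [].
split; first exact: IsumE.
move=> IQpos.
have splitS X : expect psi (sumS X [set: 'I_m] x)
    = expect psi (sumS X Good x) + expect psi (sumS X (~: Good) x).
  by rewrite /sumS !expect_sum (big_setID Good) finset.setTI finset.setTD.
have HFb : expect psi (sumS (Fop phiE U P) (~: Good) x)
    = FOm - expect psi (sumS (Fop phiE U P) Good x).
  by rewrite /FOm splitS addrC addKr.
have HGb : expect psi (sumS (Gop phiE U P) (~: Good) x)
    = expect psi (sumS (Gop phiE U P) [set: 'I_m] x)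
      - expect psi (sumS (Gop phiE U P) Good x).
  by rewrite splitS addrC addKr.
have HD : expect psi (sumS (Gop phiE U P) [set: 'I_m] x) - FOm ^+ 2 != 0.
  have : IQ != 0 by rewrite gt_eqF.
  by rewrite IQE mulf_eq0 negb_or => /andP[_].
rewrite IsumE IQE HFb HGb.
field.
exact: HD.
Qed.
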